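(* Let $\mathcal{I}$ be an instance of vertex cover and let $\mathcal{T}_S(\mathcal{I})$ be a branch-and-bound tree generated by strong-branching (product score). Let $N$ be any internal node of $\mathcal{T}_S(\mathcal{I})$ and let $N'$ be a child of $N$ resulting from branching on $x_v$ where $v\notin I(\mathcal{I},N)$. Then $I(\mathcal{I},N)\subset I(\mathcal{I},N')$.
   Context: Vertex cover IP for a graph $G=(V,E)$: minimize $\sum_v x_v$ subject to $x_u+x_v\ge1$ ($uv\in E$), $x\in\{0,1\}^V$; LP relaxation uses $x\in[0,1]^V$. In a branch-and-bound tree each node $N$ is the LP relaxation plus constraints $x_j=0$ or $x_j=1$ for variables fixed on the path from the root, and branching on $x_v$ at $N$ produces the children obtained by adding $x_v=0$ and $x_v=1$. Strong branching with product score: at node $N$ with LP value $z$ and returned optimal solution $\hat x$, for each $j$ with $\hat x_j$ fractional compute the children's optimal LP values $z^0_j,z^1_j$ ($+\infty$ if infeasible), $\Delta^-_j=z^0_j-z$, $\Delta^+_j=z^1_j-z$, and branch on a maximizer of $\Delta^+_j\Delta^-_j$ (convention $0\cdot\infty=0$). $I(\mathcal{I},N)$ denotes the union, over all optimal solutions $x$ of the LP at node $N$, of $\{j: x_j\in\{0,1\}\}$. *)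

(* Defs.v *)
From HB Require Import structures.
From mathcomp Require Import all_boot all_order all_algebra.
From mathcomp Require Import boolp classical_sets reals constructive_ereal ereal.
Set Implicit Arguments. Unset Strict Implicit. Unset Printing Implicit Defensive.
Import Order.TTheory GRing.Theory Num.Theory.
Local Open Scope ring_scope.
Local Open Scope classical_set_scope.

(* A vertex cover instance: a finite simple graph given by a symmetric,
   irreflexive edge relation [e] on a finite vertex type [V].
   A branch-and-bound node is a partial assignment [fx] : fx v = Some b means
   the constraint x_v = b has been added; None means x_v is free. *)
Definition node (V : finType) := {ffun V -> option bool}.

Definition root_node (V : finType) : node V := [ffun _ => None].

Definition set_fix (V : finType) (fx : node V) (j : V) (b : bool) : node V :=
  [ffun k => if k == j then Some b else fx k].

Section LP.
Variables (R : realType) (V : finType) (e : rel V).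

Definition lp_feasible (fx : node V) (x : V -> R) : Prop :=
  (forall u v, e u v -> 1 <= x u + x v) /\
  (forall v, 0 <= x v <= 1) /\
  (forall v b, fx v = Some b -> x v = (b%:R : R)).

Definition lp_optimal (fx : node V) (x : V -> R) : Prop :=
  lp_feasible fx x /\
  forall y, lp_feasible fx y -> \sum_v x v <= \sum_v y v.

(* optimal LP value; +oo when infeasible (infimum of the empty set) *)
Definition lp_value (fx : node V) : \bar R :=
  ereal_inf [set (\sum_v x v)%:E | x in lp_feasible fx].

Definition fractional (r : R) : Prop := 0 < r < 1.

(* product score Delta^+_j * Delta^-_j (mathcomp's ereal product has 0 * oo = 0) *)
Definition product_score (fx : node V) (j : V) : \bar R :=
  ((lp_value (set_fix fx j true) - lp_value fx) *
   (lp_value (set_fix fx j false) - lp_value fx))%E.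

Definition sb_branches (fx : node V) (j : V) : Prop :=
  exists xhat, lp_optimal fx xhat /\ fractional (xhat j) /\
    forall k, fractional (xhat k) -> (product_score fx k <= product_score fx j)%E.

Inductive sb_node : node V -> Prop :=
| sb_root : sb_node (root_node V)
| sb_child fx j b : sb_node fx -> sb_branches fx j -> sb_node (set_fix fx j b).

(* I(I,N): variables integral in some optimal LP solution at the node *)
Definition int_set (fx : node V) : set V :=
  [set j | exists x, lp_optimal fx x /\ (x j = 0 \/ x j = 1)].

End LP.

(* Main.v *)
Require Import Defs.
From HB Require Import structures.
From mathcomp Require Import all_boot all_order all_algebra.
From mathcomp Require Import boolp classical_sets reals constructive_ereal ereal.
From mathcomp Require Import ring lra.
Import Order.TTheory GRing.Theory Num.Theory.
Local Open Scope classical_set_scope.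

Module AuxM.
Local Open Scope ring_scope.
Section Aux.
Variables (R : realType) (V : finType) (e : rel V).
Let feas := @lp_feasible R V e.

Definition isfrac (r : R) : bool := (0 < r) && (r < 1).
Definition sc (s : R) (x : V -> R) : V -> R :=
  fun u => if isfrac (x u) then 1/2 + s * (x u - 1/2) else x u.

Lemma nfrac01 (r : R) : 0 <= r <= 1 -> ~~ isfrac r -> r = 0 \/ r = 1.
Proof.
rewrite /isfrac => /andP[h0 h1]; rewrite negb_and -!leNgt => /orP[h|h].
  by left; apply/eqP; rewrite eq_le h h0.
by right; apply/eqP; rewrite eq_le h h1.
Qed.

Lemma natb01 (b : bool) : (b%:R : R) = 0 \/ (b%:R : R) = 1.
Proof. by case: b; [right|left]. Qed.

Lemma sc_feas fx x s : feas fx x -> 0 <= s ->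
  (forall u, isfrac (x u) -> 0 <= 1/2 + s * (x u - 1/2) <= 1) ->
  feas fx (sc s x).
Proof.
move=> [he [hb hf]] hs hu; split; [|split].
- move=> p q epq; have := he _ _ epq; rewrite /sc.
  case fp: (isfrac (x p)); case fq: (isfrac (x q)) => h.
  + by have := mulr_ge0 hs (_ : 0 <= x p + x q - 1); nra.
  + have [q0|q1] := nfrac01 _ (hb q) (negbT fq).
      by move: fp; rewrite /isfrac; rewrite q0 in h; lra.
    by rewrite q1; have /andP[] := hu _ fp; lra.
  + have [q0|q1] := nfrac01 _ (hb p) (negbT fp).
      by move: fq; rewrite /isfrac; rewrite q0 in h; lra.
    by rewrite q1; have /andP[] := hu _ fq; lra.
  + by [].
- by move=> u; rewrite /sc; case: ifP => [/hu|_]; [|apply: hb].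
- move=> u b hub; rewrite /sc (hf _ _ hub); case: ifP => // hfr.
  by move: hfr; rewrite /isfrac; case: (natb01 b) => ->; lra.
Qed.

Lemma sc_sum s x : \sum_u sc s x u =
  \sum_u x u + (s - 1) * \sum_u (if isfrac (x u) then x u - 1/2 else 0).
Proof.
rewrite mulr_sumr -big_split; apply: eq_bigr => u _; rewrite /sc.
rewrite /=; case: ifP => _; [ring | by rewrite mulr0 addr0].
Qed.


Lemma expand fx x : feas fx x -> (exists u, isfrac (x u) && (x u != 1/2)) ->
  exists s, 1 < s /\ feas fx (sc s x) /\
    exists u0, isfrac (x u0) /\ ~~ isfrac (sc s x u0).
Proof.
move=> hx [u1 /andP[fu1 nu1]].
pose g u := if isfrac (x u) then `|x u - 1/2| else 0.
have [u0 _ hmax] := @arg_maxP _ R V u1 xpredT g isT.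
have g1 : 0 < g u1 by rewrite /g fu1 normr_gt0 subr_eq0.
have g0 : 0 < g u0 by apply: lt_le_trans g1 (hmax u1 isT).
have fu0 : isfrac (x u0) by move: g0; rewrite /g; case: ifP => //; rewrite ltxx.
set D := g u0.
have hD : D = `|x u0 - 1/2| by rewrite /D /g fu0.
have D2 : D < 1/2.
  by rewrite hD ltr_norml; move: fu0; rewrite /isfrac => /andP[]; lra.
have bnd u : isfrac (x u) -> - D <= x u - 1/2 <= D.
  by move=> fu; rewrite -ler_norml; have := hmax u isT; rewrite /g fu.
pose s := (2 * D)^-1.
have hsD : s * (2 * D) = 1 by rewrite mulVf // mulf_neq0 // gt_eqF.
have s0 : 0 < s by rewrite invr_gt0 mulr_gt0.
exists s; split; first by nra.
split.
  apply: sc_feas => //; first exact: ltW.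
  move=> u fu; have /andP[b1 b2] := bnd u fu.
  have h1 : 0 <= s * (D - (x u - 1/2)) by apply: mulr_ge0; [exact: ltW|lra].
  have h2 : 0 <= s * (D + (x u - 1/2)) by apply: mulr_ge0; [exact: ltW|lra].
  apply/andP; split; nra.
exists u0; split => //; rewrite /sc fu0 /isfrac.
have [h|h] := lerP 0 (x u0 - 1/2).
  have hxD : x u0 - 1/2 = D by rewrite hD ger0_norm.
  have -> : 1/2 + s * (x u0 - 1/2) = 1 by rewrite hxD; nra.
  by rewrite ltxx andbF.
have hxD : x u0 - 1/2 = - D by rewrite hD ltr0_norm // opprK.
have -> : 1/2 + s * (x u0 - 1/2) = 0 by rewrite hxD; nra.
by rewrite ltxx.
Qed.


Definition Sf (x : V -> R) := \sum_u (if isfrac (x u) then x u - 1/2 else 0).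

Lemma S_neg_exists x : Sf x < 0 -> exists u, isfrac (x u) && (x u != 1/2).
Proof.
case: (pickP (fun u => isfrac (x u) && (x u != 1/2))) => [u hu|none]; first by exists u.
rewrite /Sf big1 ?ltxx // => u _; have := none u.
by case: ifP => //= _ /negbFE/eqP ->; rewrite subrr.
Qed.

Lemma sc0_feas fx x : feas fx x -> feas fx (sc 0 x).
Proof. by move=> hx; apply: sc_feas => // u _; rewrite mul0r addr0; lra. Qed.

Lemma round_opt fx x : lp_optimal e fx x -> lp_optimal e fx (sc 0 x).
Proof.
move=> [hx hmin].
have hS : 0 <= Sf x.
  rewrite leNgt; apply/negP => hneg.
  have [s [s1 [hfs _]]] := expand _ _ hx (S_neg_exists _ hneg).
  have := hmin _ hfs; rewrite sc_sum -/(Sf x); nra.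
split; first exact: sc0_feas _ _ hx.
move=> y hy; rewrite sc_sum -/(Sf x); apply: le_trans (hmin y hy); lra.
Qed.

Definition hv (g : {ffun V -> 'I_3}) : V -> R := fun u => (g u : nat)%:R / 2.

Lemma half_of fx z : feas fx z -> exists g, hv g = sc 0 z.
Proof.
move=> [_ [hb _]].
exists [ffun u => if isfrac (z u) then inord 1 else if z u == 0 then inord 0 else inord 2].
apply: funext => u; rewrite /hv /sc ffunE.
case: ifP => fu; first by rewrite inordK // mul0r addr0.
case: eqP => [->|nz]; first by rewrite inordK // mul0r.
have [//|->] := nfrac01 _ (hb u) (negbT fu).
by rewrite inordK // divff.
Qed.

Lemma step fx z : feas fx z ->
  (exists g, feas fx (hv g) /\ \sum_u hv g u <= \sum_u z u) \/
  exists y, [/\ feas fx y, \sum_u y u <= \sum_u z u &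
     (#|[pred u | isfrac (y u)]| < #|[pred u | isfrac (z u)]|)%N ].
Proof.
move=> hz; case: (lerP 0 (Sf z)) => hS.
  left; have [g hg] := half_of _ _ hz; exists g; rewrite hg; split; first exact: sc0_feas _ _ hz.
  by rewrite sc_sum -/(Sf z); lra.
right; have [s [s1 [hfs [u0 [fu0 nfu0]]]]] := expand _ _ hz (S_neg_exists _ hS).
exists (sc s z); split => //.
  by rewrite sc_sum -/(Sf z); nra.
apply: proper_card; apply/properP; split.
  apply/fintype.subsetP => u; rewrite !inE /sc; case: ifP => // -> //.
by exists u0; rewrite !inE.
Qed.

Lemma roundB fx n : forall z, (#|[pred u | isfrac (z u)]| <= n)%N -> feas fx z ->
  exists g, feas fx (hv g) /\ \sum_u hv g u <= \sum_u z u.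
Proof.
elim: n => [|n IH] z hc hz; case: (step _ _ hz) => // [[y [hy hs hcy]]].
  by move: hcy; rewrite ltnNge (leq_trans hc).
have [g [hg hle]] := IH y (leq_trans hcy hc) hy.
by exists g; split => //; apply: le_trans hs.
Qed.

Lemma exists_opt fx z : feas fx z -> exists y, @lp_optimal R V e fx y.
Proof.
move=> hz.
have hB y : feas fx y -> exists g, feas fx (hv g) /\ \sum_u hv g u <= \sum_u y u.
  by move=> hy; exact: (roundB _ _ _ (leqnn _) hy).
have [g0 [hg0 _]] := hB z hz.
pose P : {pred {ffun V -> 'I_3}} := fun g => `[< feas fx (hv g) >].
pose F g := \sum_u hv g u.
have [gm hPm hmin] := @arg_minP _ R _ g0 P F (asboolT hg0).
exists (hv gm); split; first exact/asboolP.
move=> y hy; have [g [hg hle]] := hB y hy.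
exact: le_trans (hmin g (asboolT hg)) hle.
Qed.


Definition hi (r : R) := Num.min (2 * r) 1.
Definition lo (r : R) := Num.max (2 * r - 1) 0.

Lemma hl_edge r t : 0 <= r <= 1 -> 0 <= t <= 1 -> 1 <= r + t -> 1 <= hi r + lo t.
Proof.
move=> /andP[? ?] /andP[? ?] ?; rewrite /hi /lo.
by case: (lerP (2 * r) 1) => ?; case: (lerP (2 * t - 1) 0) => ?; lra.
Qed.

Lemma hl_bnd r : 0 <= r <= 1 -> (0 <= hi r <= 1) && (0 <= lo r <= 1).
Proof.
move=> /andP[? ?]; rewrite /hi /lo.
by case: (lerP (2 * r) 1) => ?; case: (lerP (2 * r - 1) 0) => ?; apply/andP; split; apply/andP; split; lra.
Qed.

Lemma hl_sum r : hi r + lo r = 2 * r.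
Proof.
rewrite /hi /lo.
by case: (lerP (2 * r) 1) => ?; case: (lerP (2 * r - 1) 0) => ?; lra.
Qed.

Lemma hl_bool (c : bool) : hi c%:R = c%:R /\ lo c%:R = c%:R.
Proof.
rewrite /hi /lo; case: (natb01 c) => ->.
  by split; [case: (lerP (2 * 0) 1) | case: (lerP (2 * 0 - 1) 0)] => ?; lra.
by split; [case: (lerP (2 * 1) 1) | case: (lerP (2 * 1 - 1) 0)] => ?; lra.
Qed.

Lemma hl_half : hi (1/2) = 1 /\ lo (1/2) = 0.
Proof.
rewrite /hi /lo.
by split; [case: (lerP (2 * (1/2)) 1) | case: (lerP (2 * (1/2) - 1) 0)] => ?; lra.
Qed.

Lemma mm1 (a a' b b' : R) : 1 <= a + b -> 1 <= a' + b' ->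
  1 <= Num.min a a' + Num.max b b'.
Proof.
by move=> ? ?; case: (lerP a a') => ?; case: (lerP b b') => ?; lra.
Qed.

Lemma mm2 (a a' b b' : R) : 1 <= a + b -> 1 <= a' + b' ->
  1 <= Num.max a a' + Num.min b b'.
Proof.
by move=> ? ?; case: (lerP a a') => ?; case: (lerP b b') => ?; lra.
Qed.

Lemma mm_bnd (a a' b b' : R) : 0 <= a <= 1 -> 0 <= a' <= 1 -> 0 <= b <= 1 -> 0 <= b' <= 1 ->
  (0 <= (Num.min a a' + Num.max b b') / 2 <= 1) /\
  (0 <= (Num.max a a' + Num.min b b') / 2 <= 1).
Proof.
move=> /andP[? ?] /andP[? ?] /andP[? ?] /andP[? ?].
by case: (lerP a a') => ?; case: (lerP b b') => ?; split; apply/andP; split; lra.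
Qed.

Definition z1 (X Y : V -> R) u := (Num.min (hi (X u)) (hi (Y u)) + Num.max (lo (X u)) (lo (Y u))) / 2.
Definition z2 (X Y : V -> R) u := (Num.max (hi (X u)) (hi (Y u)) + Num.min (lo (X u)) (lo (Y u))) / 2.

Lemma z_ok (X Y : V -> R) :
  (forall p q, e p q -> 1 <= X p + X q) -> (forall p q, e p q -> 1 <= Y p + Y q) ->
  (forall u, 0 <= X u <= 1) -> (forall u, 0 <= Y u <= 1) ->
  [/\ (forall p q, e p q -> 1 <= z1 X Y p + z1 X Y q),
      (forall p q, e p q -> 1 <= z2 X Y p + z2 X Y q),
      (forall u, 0 <= z1 X Y u <= 1) &
      (forall u, 0 <= z2 X Y u <= 1)].
Proof.
move=> eX eY bX bY.
have H1 p q : e p q -> 1 <= hi (X p) + lo (X q) /\ 1 <= hi (Y p) + lo (Y q) /\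
                       1 <= hi (X q) + lo (X p) /\ 1 <= hi (Y q) + lo (Y p).
  move=> epq; have := eX _ _ epq; have := eY _ _ epq => hy hx.
  split; first exact: hl_edge.
  split; first exact: hl_edge.
  split; apply: hl_edge => //; by rewrite addrC.
have B u : (0 <= z1 X Y u <= 1) /\ (0 <= z2 X Y u <= 1).
  have /andP[ha hb] := hl_bnd _ (bX u); have /andP[hc hd] := hl_bnd _ (bY u).
  exact: (mm_bnd _ _ _ _ ha hc hb hd).
split.
- move=> p q epq; have [h1 [h2 [h3 h4]]] := H1 p q epq.
  have := mm1 _ _ _ _ h1 h2; have := mm1 _ _ _ _ h3 h4; rewrite /z1; lra.
- move=> p q epq; have [h1 [h2 [h3 h4]]] := H1 p q epq.
  have := mm2 _ _ _ _ h1 h2; have := mm2 _ _ _ _ h3 h4; rewrite /z2; lra.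
- by move=> u; case: (B u).
- by move=> u; case: (B u).
Qed.

Lemma z_sum X Y u : z1 X Y u + z2 X Y u = X u + Y u.
Proof.
rewrite /z1 /z2.
have := addr_min_max (hi (X u)) (hi (Y u)); have := addr_min_max (lo (X u)) (lo (Y u)).
have := hl_sum (X u); have := hl_sum (Y u); rewrite [Num.max (lo _) _]maxC; lra.
Qed.

Lemma z_bb X Y u (c : bool) : X u = c%:R -> Y u = c%:R ->
  z1 X Y u = c%:R /\ z2 X Y u = c%:R.
Proof.
rewrite /z1 /z2 => -> ->; rewrite !minxx !maxxx; have [-> ->] := hl_bool c; split; lra.
Qed.

Lemma z_hb X Y u (c : bool) : X u = 1/2 -> Y u = c%:R -> z1 X Y u = c%:R.
Proof.
rewrite /z1 => -> ->; have [-> ->] := hl_bool c; have [-> ->] := hl_half.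
case: (natb01 c) => ->.
  by case: (lerP 1 0) => ?; case: (lerP 0 0) => ?; lra.
by case: (lerP 1 1) => ?; case: (lerP 0 1) => ?; lra.
Qed.

Lemma z_bh X Y u (c : bool) : X u = c%:R -> Y u = 1/2 -> z1 X Y u = c%:R.
Proof.
rewrite /z1 => -> ->; have [-> ->] := hl_bool c; have [-> ->] := hl_half.
case: (natb01 c) => ->.
  by case: (lerP 0 1) => ?; case: (lerP 0 0) => ?; lra.
by case: (lerP 1 1) => ?; case: (lerP 1 0) => ?; lra.
Qed.

End Aux.

Arguments isfrac {R}. Arguments sc {R V}. Arguments nfrac01 {R}. Arguments natb01 {R}.
Arguments round_opt {R V e}. Arguments exists_opt {R V e}. Arguments z_ok {R V e}.
Arguments z_bb {R V}. Arguments z_hb {R V}. Arguments z_bh {R V}. Arguments z_sum {R V}.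
Arguments z1 {R V}. Arguments z2 {R V}.
End AuxM.
Import AuxM.

Theorem theorem2p3 (R : realType) (V : finType) (e : rel V)
  (e_sym : symmetric e) (e_irr : irreflexive e)
  (N : node V) (v : V) (b : bool) :
  sb_node R e N ->
  sb_branches R e N v ->
  ~ int_set R e N v ->
  int_set R e N `<=` int_set R e (set_fix N v b).
Proof.
move=> _ _ nIv j [x [[hx hmin] hj]].
have [he [hb hf]] := hx.
have fxv : isfrac (x v).
  apply/negPn/negP => nf; apply: nIv; exists x; split; first by split.
  exact: nfrac01 _ (hb v) nf.
have Nv : N v = None.
  case hN: (N v) => [b0|] //; exfalso; move: fxv; rewrite /isfrac (hf _ _ hN).
  by case: (natb01 (R:=R) b0) => ->; rewrite ?ltxx ?andbF.
have nfr (c : R) : (c = 0 \/ c = 1)%R -> ~~ isfrac c.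
  by rewrite /isfrac => -[] ->; rewrite ?ltxx ?andbF.
pose X := sc 0 x.
have oX : lp_optimal e N X by apply: round_opt.
have Xv : (X v = 1/2)%R by rewrite /X /sc fxv mul0r addr0.
have Xj : X j = x j by rewrite /X /sc (negbTE (nfr _ hj)).
have Xfix k c : N k = Some c -> X k = c%:R%R by move=> h; apply: oX.1.2.2.
pose w u : R := (if u == v then b%:R else if x u == 0 then 0 else 1)%R.
have hw : lp_feasible e (set_fix N v b) w.
  split; [|split].
  - move=> p q epq; rewrite /w.
    case: (eqVneq p v) => [pv|pv]; case: (eqVneq q v) => [qv|qv].
    + by move: epq; rewrite pv qv e_irr.
    + have := he _ _ epq; rewrite pv => h.
      have : (x q != 0)%R by apply/eqP => h0; move: h fxv; rewrite h0 /isfrac; lra.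
      move=> /negbTE ->; case: (natb01 (R:=R) b) => ->; lra.
    + have := he _ _ epq; rewrite qv => h.
      have : (x p != 0)%R by apply/eqP => h0; move: h fxv; rewrite h0 /isfrac; lra.
      move=> /negbTE ->; case: (natb01 (R:=R) b) => ->; lra.
    + have := he _ _ epq; have := hb p; have := hb q.
      by case: eqP => [->|_]; case: eqP => [->|_]; move=> /andP[? ?] /andP[? ?]; lra.
  - move=> u; rewrite /w; case: eqP => _; first by case: (natb01 (R:=R) b) => ->; lra.
    by case: eqP => _; lra.
  - move=> k c; rewrite /set_fix ffunE /w; case: eqP => [_ [<-] //|_ hk].
    rewrite (hf _ _ hk); case: (natb01 (R:=R) c) => ->; first by rewrite eqxx.
    by rewrite oner_eq0.
have [y0 oy0] := exists_opt _ _ hw.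
have [[_ [hby0 _]] _] := oy0.
case fyj : (isfrac (y0 j)); last first.
  by exists y0; split => //; apply: nfrac01 _ (hby0 j) (negbT fyj).
pose Y := sc 0 y0.
have oY : lp_optimal e (set_fix N v b) Y by apply: round_opt.
have Yj : (Y j = 1/2)%R by rewrite /Y /sc fyj mul0r addr0.
have Yfix k c : (set_fix N v b) k = Some c -> Y k = c%:R%R by move=> h; apply: oY.1.2.2.
have Yv : Y v = b%:R%R by apply: Yfix; rewrite /set_fix ffunE eqxx.
have YfixN k c : N k = Some c -> Y k = c%:R%R.
  move=> h; apply: Yfix; rewrite /set_fix ffunE.
  case: eqP => // kv; by rewrite kv Nv in h.
have [[eX [bX _]] minX] := oX.
have [[eY [bY _]] minY] := oY.
have [e1 e2 b1 b2] := z_ok _ _ eX eY bX bY.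
have f2 : lp_feasible e N (z2 X Y).
  split; [exact: e2|split; first exact: b2].
  by move=> k c hk; case: (z_bb _ _ _ _ (Xfix _ _ hk) (YfixN _ _ hk)).
have f1 : lp_feasible e (set_fix N v b) (z1 X Y).
  split; [exact: e1|split; first exact: b1].
  move=> k c; rewrite /set_fix ffunE; case: eqP => [-> [<-]|_ hk].
    exact: (z_hb _ _ _ _ Xv Yv).
  by case: (z_bb _ _ _ _ (Xfix _ _ hk) (YfixN _ _ hk)).
have hsum : (\sum_u z1 X Y u + \sum_u z2 X Y u = \sum_u X u + \sum_u Y u)%R.
  by rewrite -!big_split /=; apply: eq_bigr => u _; apply: z_sum.
exists (z1 X Y); split.
  split => // y hy; have := minX _ f2; have := minY _ hy; lra.
case: hj => hj.
  by left; apply: (z_bh _ _ _ false); rewrite // Xj hj.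
by right; apply: (z_bh _ _ _ true); rewrite // Xj hj.
Qed.
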